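(* Let $K$ be an infinite field of characteristic $p>0$, let $\lambda=(\lambda_1,\dots,\lambda_n)$ and $\mu=(\mu_1,\dots,\mu_n)$ be partitions of $r$ with $\mu_2\le\lambda_1$, let $k,d$ be positive integers, and let $\mu^+=(\mu_1+kp^d,\mu_2,\dots,\mu_n)$. Let $U\in A$ and write $[U]=\sum_{T\in\mathrm{Std}(\mu)}c_T[T]$ in $\Delta(\mu)$ with $c_T\in K$. Then $[U^+]=\sum_{T\in\mathrm{Std}(\mu)}c_T[T^+]$ in $\Delta(\mu^+)$; i.e. writing $[U^+]=\sum_{T\in\mathrm{Std}(\mu)}c_{T^+}[T^+]$, one has $c_T=c_{T^+}$ for all $T\in\mathrm{Std}(\mu)$.
   Context: $V=K^n$ with basis $e_1<\dots<e_n$, written $1,\dots,n$; $D(\nu)=D_{\nu_1}V\otimes\cdots\otimes D_{\nu_n}V$ (divided powers), $i^{(a)}$ the $a$-th divided power of $e_i$. $\Delta(\nu)$ is the Weyl module of the Schur algebra $S_K(n,|\nu|)$, with the Akin–Buchsbaum–Weyman surjection $d'_\nu:D(\nu)\to\Delta(\nu)$. A tableau of shape $\nu$ is a filling of the Young diagram of $\nu$ by entries in $\{1,\dots,n\}$; it is standard if rows weakly increase and columns strictly increase; $\mathrm{Std}(\nu)$ is the set of standard tableaux of shape $\nu$. For a tableau $T$, $x_T=x_T(1)\otimes\cdots\otimes x_T(n)\in D(\nu)$ where $x_T(i)=1^{(a_{i1})}\cdots n^{(a_{in})}$ with $a_{ij}$ the number of $j$'s in row $i$, and $[T]=d'_\nu(x_T)$;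 the $[T]$, $T\in\mathrm{Std}(\nu)$, form a basis of $\Delta(\nu)$. For a tableau $T$ of shape $\mu$, $T^+$ is the tableau of shape $\mu^+$ obtained by inserting $kp^d$ entries $1$ at the start of the top row. $A$ is the set of tableaux of shape $\mu$ whose row $i$ (for each $i$) contains only entries $\ge i$ and whose first row contains exactly $\lambda_1+t$ entries equal to $1$ for some $0\le t\le\lambda_2$ (rows written as $i^{(a_{ii})}(i+1)^{(a_{i,i+1})}\cdots n^{(a_{in})}$, the first row as $1^{(\lambda_1+t)}2^{(a_{12})}\cdots n^{(a_{1n})}$). *)

(* Defs.v *)
From mathcomp Require Import all_boot all_order all_algebra.
Set Implicit Arguments. Unset Strict Implicit. Unset Printing Implicit Defensive.
Import GRing.Theory.
Local Open Scope ring_scope.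

(* A tableau is a list of rows (row 1 first), entries are natural numbers
   standing for basis vectors e_1,...,e_n.  Its shape is the list of row
   lengths. *)
Definition tableau := seq (seq nat).
Definition shape (T : tableau) : seq nat := map size T.

(* nu = (nu_1,...,nu_n) is a partition of r with n parts (zeros allowed). *)
Definition partition_of (n r : nat) (nu : seq nat) : bool :=
  [&& size nu == n, sorted geq nu & sumn nu == r].

Definition tab_of_shape (n : nat) (nu : seq nat) (T : tableau) : bool :=
  (shape T == nu) && all (all (fun a => (1 <= a <= n)%N)) T.

Definition is_standard (T : tableau) : bool :=
  all (sorted leq) T &&
  all (fun i => all (fun j => (nth 0 (nth [::] T i) j < nth 0 (nth [::] T i.+1) j)%N)
                    (iota 0 (size (nth [::] T i.+1))))
      (iota 0 (size T).-1).

Fixpoint words (n m : nat) : seq (seq nat) :=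
  if m is m'.+1 then [seq a :: w | a <- iota 1 n, w <- words n m'] else [:: [::]].

Fixpoint tabs_of_shape (n : nat) (sh : seq nat) : seq tableau :=
  if sh is m :: sh' then [seq r :: t | r <- words n m, t <- tabs_of_shape n sh']
  else [:: [::]].

Definition Std (n : nat) (nu : seq nat) : seq tableau :=
  [seq T <- tabs_of_shape n nu | is_standard T].

Definition tab_plus (m : nat) (T : tableau) : tableau :=
  if T is r :: T' then (nseq m 1%N ++ r) :: T' else [:: nseq m 1%N].

Definition in_A (n : nat) (lam mu : seq nat) (U : tableau) : Prop :=
  [/\ tab_of_shape n mu U,
      forall i, (i < size U)%N -> all (fun a => i.+1 <= a)%N (nth [::] U i)
    & exists2 t, (t <= nth 0 lam 1)%N &
        count_mem 1%N (nth [::] U 0) = (nth 0 lam 0 + t)%N].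

(* ---------------------------------------------------------------------
   The Akin-Buchsbaum-Weyman map d'_nu : D(nu) -> Lambda(nu') and
   Delta(nu) = image of d'_nu  (ABW's definition of the Weyl module).
   An element of Lambda^{c_1}V (x) ... (x) Lambda^{c_m}V is represented by its
   coordinate function on "column fillings" G: the coordinate of
   (e_{f^1_1} /\ ... /\ e_{f^1_{c_1}}) (x) ... at G is the product over the
   columns j of the sign of the permutation sorting column j of F onto
   column j of G, provided column j of G is strictly increasing and a
   rearrangement of column j of F, and 0 otherwise.  The coordinates at the
   G whose columns are strictly increasing of the right lengths are exactly
   the coordinates in the standard basis e_S of the tensor product of
   exterior powers, so this representation is faithful.
   --------------------------------------------------------------------- *)

(* column j (0-based) of a filling, read top to bottom *)
Definition col (F : tableau) (j : nat) : seq nat :=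
  [seq nth 0 r j | r <- F & (j < size r)%N].

Definition inversions (f : seq nat) : nat :=
  (\sum_(i < size f) \sum_(j < size f | (i < j)%N) (nth 0 f j < nth 0 f i))%N.

(* coordinate of e_{f_1} /\ ... /\ e_{f_c} on the basis vector e_g *)
Definition colcoef (K : fieldType) (f g : seq nat) : K :=
  if sorted ltn g && perm_eq f g then (-1) ^+ inversions f else 0.

Definition ncols (T : tableau) : nat := foldr maxn 0%N (shape T).

(* the diagonalization of 1^(a_1)...n^(a_n) is the sum of all distinct
   words with that content: all distinct row rearrangements of T *)
Fixpoint row_rearr (T : tableau) : seq tableau :=
  if T is r :: T' then [seq w :: F | w <- permutations r, F <- row_rearr T']
  else [:: [::]].

(* [T] = d'_nu(x_T), as a coordinate function *)
Definition weyl_el (K : fieldType) (T : tableau) : tableau -> K :=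
  fun G => \sum_(F <- row_rearr T) \prod_(j < ncols T) colcoef K (col F j) (col G j).

Definition infinite_field (K : fieldType) : Prop :=
  forall s : seq K, exists x : K, x \notin s.

(* Main.v *)
Require Import Defs.
From mathcomp Require Import all_boot all_order all_algebra.
Import GRing.Theory.
Local Open Scope ring_scope.

From mathcomp Require Import zify.
Require Import Defs.
Set Implicit Arguments. Unset Strict Implicit. Unset Printing Implicit Defensive.

Lemma col_cons (r : seq nat) X j :
  col (r :: X) j = if (j < size r)%N then nth 0%N r j :: col X j else col X j.
Proof. by rewrite /col /=; case: ifP. Qed.

Lemma col_nil X j : all (fun r => size r <= j)%N X -> col X j = [::].
Proof.
elim: X => [|r X IH] //= /andP[h1 h2]; by rewrite col_cons ltnNge h1 /= IH.
Qed.

Lemma mem_row_rearr T F :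
  (F \in row_rearr T) = all2 (fun a b => perm_eq a b) F T.
Proof.
elim: T F => [|r T IH] [|w F] //=.
- apply/negP => /allpairsPdep [x [y [_ _ ]]] //.
- apply/allpairsPdep/andP => [[x [y [h1 h2 [-> ->]]]]|[h1 h2]].
    by rewrite -IH h2 -mem_permutations h1.
  by exists w, F; rewrite mem_permutations IH h1 h2.
Qed.

Lemma row_rearr_uniq T : uniq (row_rearr T).
Proof.
elim: T => [|r T IH] //=.
apply: allpairs_uniq => //; first exact: permutations_uniq.
by move=> [a b] [a' b'] _ _ /= [-> ->].
Qed.

Lemma all2_shape (F T : tableau) : all2 (fun a b => perm_eq a b) F T -> shape F = shape T.
Proof.
elim: F T => [|w F IH] [|r T] //= /andP[h1 h2].
by rewrite (perm_size h1) (IH _ h2).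
Qed.

Lemma all2_flatten (F T : tableau) : all2 (fun a b => perm_eq a b) F T ->
  perm_eq (flatten F) (flatten T).
Proof.
elim: F T => [|w F IH] [|r T] //= /andP[h1 h2].
by rewrite perm_cat // IH.
Qed.

Lemma mem_words n m w : w \in words n m -> size w = m /\ all (fun a => (1 <= a <= n)%N) w.
Proof.
elim: m w => [|m IH] w /=; first by rewrite inE => /eqP ->.
move=> /allpairsPdep [a [v [h1 h2 ->]]]; have [e1 e2] := IH _ h2.
by rewrite /= e1 e2 andbT; rewrite mem_iota in h1; split=> //; move: h1; case: a => //.
Qed.

Lemma words_uniq n m : uniq (words n m).
Proof.
elim: m => [|m IH] //=; apply: allpairs_uniq => //; first exact: iota_uniq.
by move=> [a b] [a' b'] _ _ /= [-> ->].
Qed.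

Lemma mem_tabs n sh T : T \in tabs_of_shape n sh -> tab_of_shape n sh T.
Proof.
rewrite /tab_of_shape; elim: sh T => [|m sh IH] T /=; first by rewrite inE => /eqP ->.
move=> /allpairsPdep [w [X [h1 h2 ->]]]; have [e1 e2] := mem_words h1.
move: (IH _ h2); rewrite /shape /= => /andP[/eqP -> ->]; by rewrite e1 e2 eqxx.
Qed.

Lemma tabs_uniq n sh : uniq (tabs_of_shape n sh).
Proof.
elim: sh => [|m sh IH] //=; apply: allpairs_uniq => //; first exact: words_uniq.
by move=> [a b] [a' b'] _ _ /= [-> ->].
Qed.

Lemma Std_uniq n sh : uniq (Std n sh).
Proof. exact/filter_uniq/tabs_uniq. Qed.

Lemma mem_Std n sh T : T \in Std n sh -> tab_of_shape n sh T /\ is_standard T.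
Proof. by rewrite mem_filter => /andP[h1 h2]; split=> //; apply: mem_tabs. Qed.

Lemma is_standard_cons (t : seq nat) X :
  is_standard (t :: X) =
  [&& sorted leq t, is_standard X &
      (if X is t2 :: _ then all (fun j => nth 0 t j < nth 0 t2 j)%N (iota 0 (size t2)) else true)].
Proof.
rewrite /is_standard /=; case: X => [|t2 X] /=; first by rewrite !andbT.
rewrite -[1%N]/(1+0)%N iotaDl all_map /=.
have -> : forall a b c e f : bool, [&& [&& a, b & c], e & f] = [&& a, b && c && f & e]
  by case; case; case; case; case.
by [].
Qed.

Definition colsorted (T : tableau) := forall j, sorted ltn (col T j).

Lemma sorted_geq_all (a : nat) l : sorted geq (a :: l) -> all (fun x => x <= a)%N l.
Proof.
move=> /= h; have := order_path_min (leT := geq) _ h.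
by apply; move=> x y z /= h1 h2; apply: leq_trans h1.
Qed.

Lemma all_shape_col (X : tableau) j a : all (fun x => x <= a)%N (shape X) ->
  (a <= j)%N -> col X j = [::].
Proof.
move=> h ha; apply: col_nil; apply/allP => x xX.
by have := allP h _ (map_f size xX) => /= /leq_trans; apply.
Qed.

Lemma standard_colsorted T : is_standard T -> sorted geq (shape T) -> colsorted T.
Proof.
elim: T => [|t X IH]; first by move=> _ _ j.
rewrite is_standard_cons => /and3P[st sX cX] sh j.
have shX : sorted geq (shape X) by move: sh => /= /path_sorted.
have IHX := IH sX shX.
have allX := sorted_geq_all sh.
rewrite col_cons; case: ifP => hj; last exact: IHX.
clear IH; case: X sX cX shX IHX allX sh => [|t2 X'] sX cX shX IHX allX sh //=.
have := IHX j; rewrite col_cons; case: ifP => hj2.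
  move=> h /=; rewrite [path _ _ _]h andbT.
  by have := allP cX j; rewrite mem_iota /= hj2 => /(_ isT).
move=> _ /=.
rewrite (@all_shape_col X' j (size t2)) //; last by rewrite leqNgt hj2.
by apply: sorted_geq_all; move: sh => /= /andP[].
Qed.

Lemma std_next_ge b t t2 X : is_standard [:: t, t2 & X] ->
  sorted geq (shape [:: t, t2 & X]) -> all (fun a => b <= a)%N t ->
  all (fun a => b.+1 <= a)%N t2.
Proof.
rewrite is_standard_cons /= => /and3P[_ _ cX] /andP[h1 _] ht.
apply/(all_nthP 0) => j hj.
have := allP cX j; rewrite mem_iota /= hj => /(_ isT).
apply: leq_trans; rewrite ltnS.
by apply: (allP ht); apply: mem_nth; apply: leq_trans h1.
Qed.

Lemma std_entries_ge b T : is_standard T -> sorted geq (shape T) ->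
  all (fun a => b <= a)%N (head [::] T) -> all (all (fun a => b <= a)%N) T.
Proof.
elim: T => [|t X IH] //= st sh ht; rewrite ht /=.
move: st sh; case: X IH => [|t2 X] IH // st sh.
apply: IH.
- by move: st; rewrite is_standard_cons => /and3P[].
- by move: sh => /= /andP[].
- have := std_next_ge st sh ht => /= h.
  by apply/allP => x /(allP h); apply: ltnW.
Qed.

Lemma count1_flatten t X : all (all (fun a => 2 <= a)%N) X ->
  count_mem 1%N (flatten (t :: X)) = count_mem 1%N t.
Proof.
move=> h; rewrite /= count_cat; suff -> : count_mem 1%N (flatten X) = 0%N by rewrite addn0.
apply/count_memPn; apply/negP => /flattenP [x xX].
by move=> /(allP (allP h _ xX)).
Qed.

Lemma std_count1 t X : is_standard (t :: X) -> sorted geq (shape (t :: X)) ->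
  all (fun a => 1 <= a)%N t ->
  count_mem 1%N (flatten (t :: X)) = count_mem 1%N t.
Proof.
move=> st sh ht; apply: count1_flatten.
case: X st sh => [|t2 X] // st sh.
apply: std_entries_ge.
- by move: st; rewrite is_standard_cons => /and3P[].
- by move: sh => /= /andP[].
- exact: std_next_ge st sh ht.
Qed.

Fixpoint psi (B : nat) (T : tableau) : nat :=
  if T is t :: X then (sumn t * B ^ size X + psi B X)%N else 0%N.

Lemma psi_lt B X : all (fun t => sumn t < B)%N X -> (psi B X < B ^ size X)%N.
Proof.
elim: X => [|t X IH] /=; first by rewrite expn0.
move=> /andP[h1 h2]; rewrite expnS.
apply: (@leq_trans ((sumn t).+1 * B ^ size X)); last by rewrite leq_mul2r h1 orbT.
by have := IH h2; rewrite mulSn; lia.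
Qed.

Lemma sumn_le_eq (s s' : seq nat) : size s = size s' ->
  (forall j, j < size s -> nth 0 s j <= nth 0 s' j)%N ->
  (sumn s <= sumn s')%N /\ (sumn s = sumn s' -> s = s').
Proof.
elim: s s' => [|a s IH] [|a' s'] //= [hs] h.
have h0 : (a <= a')%N := h 0%N isT.
have [h1 h2] := IH s' hs (fun j hj => h j.+1 hj).
split; first exact: leq_add.
move=> e.
have ea : a = a' by lia.
by rewrite ea (h2 _) //; lia.
Qed.

Lemma all2_refl (T : tableau) : all2 (fun a b => perm_eq a b) T T.
Proof. by elim: T => //= t T ->; rewrite perm_refl. Qed.

Lemma rel_tri B (T T' F : tableau) :
  shape T = shape T' -> all (fun t => sumn t < B)%N T -> all (fun t => sumn t < B)%N T' ->
  colsorted T -> all (sorted leq) T -> all (sorted leq) T' ->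
  all2 (fun a b => perm_eq a b) F T' ->
  (forall j, perm_eq (col F j) (col T j)) ->
  (F = T /\ T' = T) \/ (psi B T < psi B T')%N.
Proof.
elim: T T' F => [|t X IH] [|t' X'] [|w F1] //=; try by left.
move=> [hsz hsh] /andP[bt bX] /andP[bt' bX'] cs /andP[st sX] /andP[st' sX'] /andP[pw pF] hc.
have szw : size w = size t by rewrite (perm_size pw) hsz.
have pt : forall j, (j < size t)%N -> (nth 0 t j <= nth 0 w j)%N.
  move=> j hj; have := hc j; rewrite !col_cons szw hj => /perm_mem hm.
  have := cs j; rewrite col_cons hj /= => hp.
  have := hm (nth 0%N w j); rewrite !inE eqxx /= => /esym.
  case/orP => [/eqP -> //|hx].
  have := order_path_min ltn_trans hp => /allP /(_ _ hx) /ltnW //.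
have [hle heq] := sumn_le_eq (esym szw) pt.
have ew' : sumn w = sumn t' by apply: perm_sumn.
have szX : size X = size X' by rewrite -(size_map size X) -(size_map size X'); congr size; exact: hsh.
case: (ltngtP (sumn t) (sumn t')) => hcmp.
- right; rewrite -szX.
  apply: (@leq_trans ((sumn t).+1 * B ^ size X)).
    by have := psi_lt bX; rewrite mulSn; lia.
  by apply: leq_trans (leq_addr _ _); rewrite leq_mul2r hcmp orbT.
- by move: hle; rewrite ew' leqNgt hcmp.
have ewt : w = t by apply: esym; apply: heq; rewrite ew'.
have ett' : t' = t.
  apply: (sorted_eq leq_trans anti_leq) => //.
  by rewrite -ewt perm_sym.
have csX : colsorted X.
  move=> j; have := cs j; rewrite col_cons; case: ifP => // _ /path_sorted //.
have hcX : forall j, perm_eq (col F1 j) (col X j).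
  move=> j; have := hc j; rewrite !col_cons ewt; case: ifP => // _.
  by rewrite perm_cons.
have := IH X' F1 hsh bX bX' csX sX sX' pF hcX.
case=> [[-> ->]|hlt]; first by left; rewrite ewt ett'.
by right; rewrite ett' -szX ltn_add2l.
Qed.

Lemma ncols_ge (X : tableau) r : r \in X -> (size r <= ncols X)%N.
Proof.
rewrite /ncols; elim: X => [|t X IH] //=; rewrite inE => /orP[/eqP ->|h].
  exact: leq_maxl.
by rewrite leq_max IH ?orbT.
Qed.

Lemma ncols_all (X : tableau) : all (fun x => x <= ncols X)%N (shape X).
Proof. by apply/allP => x /mapP [r rX ->]; apply: ncols_ge. Qed.

Lemma colcoef_neq0 (K : fieldType) f g : colcoef K f g != 0 -> sorted ltn g /\ perm_eq f g.
Proof. by rewrite /colcoef; case: ifP => [/andP[]|] //; rewrite eqxx. Qed.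

Lemma term_neq0 (K : fieldType) (N : nat) (F G : tableau) :
  \prod_(j < N) colcoef K (col F j) (col G j) != 0 ->
  forall j, (j < N)%N -> sorted ltn (col G j) /\ perm_eq (col F j) (col G j).
Proof.
move=> /prodf_neq0 h j hj; exact: colcoef_neq0 (h (Ordinal hj) isT).
Qed.

Lemma sum_neq0 (K : fieldType) (I : eqType) (r : seq I) (f : I -> K) :
  \sum_(i <- r) f i != 0 -> exists2 i, i \in r & f i != 0.
Proof.
elim: r => [|a r IH]; first by rewrite big_nil eqxx.
rewrite big_cons; case: (eqVneq (f a) 0) => [->|h]; last by move=> _; exists a; rewrite ?inE ?eqxx.
by rewrite add0r => /IH [i hi hf]; exists i => //; rewrite inE hi orbT.
Qed.

Lemma colperm_all (X F G : tableau) : all2 (fun a b => perm_eq a b) F X ->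
  shape G = shape X -> (forall j, (j < ncols X)%N -> perm_eq (col F j) (col G j)) ->
  forall j, perm_eq (col F j) (col G j).
Proof.
move=> hF hG h j; case: (ltnP j (ncols X)) => hj; first exact: h.
rewrite (@all_shape_col F j (ncols X)) ?(@all_shape_col G j (ncols X)) //.
  by rewrite hG ncols_all.
by rewrite (all2_shape hF) ncols_all.
Qed.

Lemma weyl_rel (K : fieldType) (X G : tableau) : weyl_el K X G != 0 ->
  exists2 F, F \in row_rearr X &
    forall j, (j < ncols X)%N -> sorted ltn (col G j) /\ perm_eq (col F j) (col G j).
Proof.
rewrite /weyl_el => /sum_neq0 [F hF hp]; exists F => //.
exact: term_neq0 hp.
Qed.

Lemma inv_sorted (f : seq nat) : sorted ltn f -> inversions f = 0%N.
Proof.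
move=> hs; rewrite /inversions; apply: big1 => i _; apply: big1 => j hij.
have := sorted_ltn_nth ltn_trans 0%N hs; move=> /(_ i j).
rewrite !inE => /(_ (ltn_ord i) (ltn_ord j) hij) h.
by rewrite ltnNge (ltnW h).
Qed.

Lemma colcoef_self (K : fieldType) f : sorted ltn f -> colcoef K f f = 1.
Proof. by move=> h; rewrite /colcoef h perm_refl inv_sorted. Qed.

Lemma weyl_self (K : fieldType) B (T : tableau) : colsorted T -> all (sorted leq) T ->
  all (fun t => sumn t < B)%N T -> weyl_el K T T = 1.
Proof.
move=> cs st bT.
rewrite /weyl_el (bigD1_seq T) ?row_rearr_uniq ?mem_row_rearr ?all2_refl //=.
rewrite big1 ?mul1r; last by move=> j _; apply: colcoef_self.
rewrite big1_seq ?addr0 // => F /andP[hne hF].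
apply/eqP; apply/negPn/negP => hnz.
have h1 := term_neq0 hnz.
move: hF; rewrite mem_row_rearr => hF.
have hc := colperm_all hF (erefl _) (fun j hj => (h1 j hj).2).
case: (rel_tri (erefl _) bT bT cs st st hF hc) => [[e _]|]; last by rewrite ltnn.
by move: hne; rewrite e eqxx.
Qed.

Lemma count_row x (t : seq nat) N : (size t <= N)%N ->
  count_mem x t = (\sum_(j < N) ((j < size t) && (nth 0 t j == x)))%N.
Proof.
elim: t N => [|a t IH] N /=; first by move=> _; rewrite big1.
case: N => [|N] // h; rewrite big_ord_recl /= eq_sym (IH N h); congr (_ + _)%N.
Qed.

Lemma count_cols x (X : tableau) N : all (fun r => size r <= N)%N X ->
  count_mem x (flatten X) = (\sum_(j < N) count_mem x (col X j))%N.
Proof.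
elim: X => [|t X IH] /=; first by move=> _; rewrite big1 // => j _; rewrite /col.
move=> /andP[h1 h2]; rewrite count_cat (IH h2) (count_row x h1) -big_split /=.
apply: eq_bigr => j _; rewrite col_cons; case: ifP => //= _.
Qed.

Lemma rel_count x (X G F : tableau) : all2 (fun a b => perm_eq a b) F X ->
  shape G = shape X -> (forall j, perm_eq (col F j) (col G j)) ->
  count_mem x (flatten X) = count_mem x (flatten G).
Proof.
move=> hF hG hc.
have hN : forall Y : tableau, shape Y = shape X -> all (fun r => size r <= ncols X)%N Y.
  move=> Y hY; apply/allP => r rY; have := allP (ncols_all X) (size r).
  by rewrite -hY => /(_ (map_f size rY)).
rewrite -(permP (all2_flatten hF)) (count_cols x (hN _ (all2_shape hF))).
rewrite (count_cols x (hN _ hG)); apply: eq_bigr => j _.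
exact/permP.
Qed.

Lemma mem_sumn_le (l : seq nat) x : x \in l -> (x <= sumn l)%N.
Proof.
elim: l => [|a l IH] //=; rewrite inE => /orP[/eqP ->|h]; first exact: leq_addr.
by apply: leq_trans (IH h) (leq_addl _ _).
Qed.

Lemma sumn_bound (t : seq nat) n : all (fun a => a <= n)%N t -> (sumn t <= n * size t)%N.
Proof.
elim: t => [|a t IH] //= /andP[h1 h2]; rewrite mulnS; exact: leq_add (IH h2).
Qed.

Lemma tab_bound n (mu : seq nat) T : tab_of_shape n mu T ->
  all (fun t => sumn t < (n * sumn mu).+1)%N T.
Proof.
move=> /andP[/eqP hs he]; apply/allP => t tT; rewrite ltnS.
apply: (@leq_trans (n * size t)).
  apply: sumn_bound; apply/allP => a ha.
  by have := allP (allP he _ tT) _ ha => /andP[].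
rewrite leq_mul2l; apply/orP; right; rewrite -hs; apply: mem_sumn_le.
exact: map_f.
Qed.

Lemma leq_sum_mem (l : seq tableau) (f : tableau -> nat) x : uniq l -> x \in l ->
  (f x <= \sum_(y <- l) f y)%N.
Proof. by move=> u h; rewrite (bigD1_seq x) //= leq_addr. Qed.

Lemma step3 (K : fieldType) n (mu : seq nat) (U : tableau) (c : tableau -> K) s :
  sorted geq mu -> tab_of_shape n mu U ->
  (s <= count_mem 1%N (flatten U))%N ->
  (forall G, weyl_el K U G = \sum_(T <- Std n mu) c T * weyl_el K T G) ->
  forall T, T \in Std n mu -> (count_mem 1%N (flatten T) < s)%N -> c T = 0.
Proof.
move=> smu hU hsU hrel T0 hT0 hc0.
apply/eqP; apply: contraT => hne.
set B := (n * sumn mu).+1.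
pose P : pred nat := fun k => has (fun T => [&& (count_mem 1%N (flatten T) < s)%N, c T != 0 & (psi B T == k)]) (Std n mu).
have exP : exists k, P k by exists (psi B T0); apply/hasP; exists T0 => //; rewrite hc0 hne eqxx.
have ubP : forall k, P k -> (k <= \sum_(T <- Std n mu) psi B T)%N.
  move=> k /hasP [T hT /and3P[_ _ /eqP <-]]; exact: leq_sum_mem (Std_uniq _ _) hT.
case: (ex_maxnP exP ubP) => km /hasP [Tm hTm /and3P[hcm hnm /eqP hpm]] hmax.
have [htm stm] := mem_Std hTm.
have shTm : shape Tm = mu by case/andP: htm => /eqP.
have shU : shape U = mu by case/andP: hU => /eqP.
have csm : colsorted Tm by apply: standard_colsorted => //; rewrite shTm.
have rsm : all (sorted leq) Tm by case/andP: stm.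
have bm := tab_bound htm.
have := hrel Tm.
have -> : weyl_el K U Tm = 0.
  apply/eqP; apply: contraT => hw.
  case: (weyl_rel hw) => F hF hj.
  rewrite mem_row_rearr in hF.
  have hc := colperm_all hF (etrans shTm (esym shU)) (fun j h => (hj j h).2).
  have := rel_count 1%N hF (etrans shTm (esym shU)) hc.
  by move=> e; move: hsU; rewrite e leqNgt hcm.
rewrite (bigD1_seq Tm) ?Std_uniq //= (weyl_self K csm rsm bm) mulr1.
rewrite big1_seq ?addr0; first by move=> /esym /eqP; rewrite (negbTE hnm).
move=> T /andP[hneT hT].
case: (eqVneq (c T) 0) => [->|hcT]; first by rewrite mul0r.
case: (eqVneq (weyl_el K T Tm) 0) => [->|hw]; first by rewrite mulr0.
exfalso.
have [ht st] := mem_Std hT.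
have shT : shape T = mu by case/andP: ht => /eqP.
case: (weyl_rel hw) => F hF hj.
rewrite mem_row_rearr in hF.
have hc := colperm_all hF (etrans shTm (esym shT)) (fun j h => (hj j h).2).
have ecnt := rel_count 1%N hF (etrans shTm (esym shT)) hc.
have rsT : all (sorted leq) T by case/andP: st.
case: (rel_tri (etrans shTm (esym shT)) bm (tab_bound ht) csm rsm rsT hF hc).
  by move=> [_ e]; move: hneT; rewrite e eqxx.
move=> hlt.
have : P (psi B T) by apply/hasP; exists T => //; rewrite ecnt hcm hcT eqxx.
by move=> /hmax; rewrite -hpm leqNgt hlt.
Qed.

Definition fpart (K : fieldType) (T1 G : tableau) (s : nat) (u : seq nat) : K :=
  \sum_(F1 <- row_rearr T1) \prod_(j < s) colcoef K (nth 0%N u j :: col F1 j) (col G j).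

Definition tailg (G : tableau) (s L : nat) : seq (seq nat) := [seq col G (s + i)%N | i <- iota 0 L].

Definition Bv (K : fieldType) (v : seq nat) (gs : seq (seq nat)) : K :=
  \prod_(i < size gs) colcoef K [:: nth 0%N v i] (nth [::] gs i).

Lemma foldr_maxn_le (l : seq nat) s : all (fun x => x <= s)%N l -> (foldr maxn 0 l <= s)%N.
Proof. by elim: l => [|a l IH] //= /andP[h1 h2]; rewrite geq_max h1 IH. Qed.

Lemma ncols_cons (r1 : seq nat) T1 s : all (fun x => x <= s)%N (shape T1) -> (s <= size r1)%N ->
  ncols (r1 :: T1) = size r1.
Proof.
move=> h hs; rewrite /ncols /=; apply/maxn_idPl.
exact: leq_trans (foldr_maxn_le h) hs.
Qed.

Lemma weyl_split (K : fieldType) (r1 : seq nat) (T1 G : tableau) s N :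
  all (fun x => x <= s)%N (shape T1) -> size r1 = (s + N)%N ->
  weyl_el K (r1 :: T1) G =
  \sum_(w <- permutations r1) fpart K T1 G s (take s w) * Bv K (drop s w) (tailg G s N).
Proof.
move=> hT1 eN.
have hs : (s <= size r1)%N by rewrite eN leq_addr.
rewrite /weyl_el (ncols_cons hT1 hs) /= big_allpairs_dep.
apply: eq_big_seq => w hw.
have szw : size w = (s + N)%N by rewrite -eN; apply: perm_size; rewrite -mem_permutations.
rewrite /fpart mulr_suml; apply: eq_big_seq => F1 hF1.
have shF1 : all (fun x => x <= s)%N (shape F1).
  by rewrite mem_row_rearr in hF1; rewrite (all2_shape hF1).
rewrite eN big_split_ord /Bv size_map size_iota; congr (_ * _).
  apply: eq_bigr => j _ /=; rewrite col_cons szw (leq_trans (ltn_ord j) (leq_addr _ _)).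
  by rewrite nth_take.
apply: eq_bigr => i _ /=; rewrite col_cons szw ltn_add2l ltn_ord.
rewrite (@all_shape_col F1 _ s) ?leq_addr // nth_drop.
by rewrite (nth_map 0%N) ?size_iota // nth_iota.
Qed.

Lemma colcoef_single (K : fieldType) x g : colcoef K [:: x] g = (g == [:: x])%:R.
Proof.
rewrite /colcoef; case: (eqVneq g [:: x]) => [->|hne].
  by rewrite /= perm_refl inv_sorted.
case: ifP => // /andP[_ hp]; exfalso; move: hne.
have := perm_size hp; case: g hp => [|y [|z g]] //= hp _.
by have := perm_mem hp y; rewrite !inE eqxx => /eqP ->; rewrite eqxx.
Qed.

Lemma Bv_eq (K : fieldType) v gs : size v = size gs ->
  Bv K v gs = (gs == map (fun x => [:: x]) v)%:R.
Proof.
rewrite /Bv; elim: gs v => [|g gs IH] [|x v] //=; first by rewrite big_ord0.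
move=> [hs]; rewrite big_ord_recl /= colcoef_single.
under eq_bigr => i _ do rewrite add0n.
rewrite IH // eqseq_cons.
by case: (g == _); case: (gs == _); rewrite ?mul1r ?mul0r.
Qed.

Lemma Bv_single (K : fieldType) v ys : size v = size ys ->
  Bv K v (map (fun x => [:: x]) ys) = (v == ys)%:R.
Proof.
move=> h; have inj : injective (fun x : nat => [:: x]) by move=> a b [].
by rewrite Bv_eq ?size_map // (inj_eq (inj_map inj)) eq_sym.
Qed.

Lemma size1_map (gs : seq (seq nat)) : all (fun g => size g == 1%N) gs ->
  gs = map (fun x => [:: x]) (map (head 0%N) gs).
Proof.
elim: gs => [|g gs IH] //= /andP[h1 h2]; rewrite -IH //.
by case: g h1 => [|a [|b g]].
Qed.

Lemma sum_filter_take (K : fieldType) (f : seq nat -> K) s L y :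
  \sum_(w <- permutations L) f (take s w) * (drop s w == y)%:R =
  \sum_(u <- map (take s) [seq w <- permutations L | drop s w == y]) f u.
Proof.
rewrite big_map big_filter [RHS]big_mkcond /=; apply: eq_bigr => w _.
by case: (drop s w == y); rewrite ?mulr1 ?mulr0.
Qed.

Lemma mem_filter_take s (L y u : seq nat) : (s + size y = size L)%N ->
  (u \in map (take s) [seq w <- permutations L | drop s w == y]) =
  (size u == s) && perm_eq L (u ++ y).
Proof.
move=> hsz; apply/mapP/andP.
  move=> [w]; rewrite mem_filter mem_permutations => /andP[/eqP hd hp] ->.
  have hw : (s <= size w)%N by rewrite (perm_size hp) -hsz leq_addr.
  by rewrite size_takel // eqxx -hd cat_take_drop perm_sym.
move=> [/eqP hu hp]; exists (u ++ y); last by rewrite -hu take_size_cat.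
by rewrite mem_filter mem_permutations -hu drop_size_cat // eqxx perm_sym.
Qed.

Lemma uniq_filter_take s (L y : seq nat) :
  uniq (map (take s) [seq w <- permutations L | drop s w == y]).
Proof.
rewrite map_inj_in_uniq ?filter_uniq ?permutations_uniq //.
move=> w1 w2; rewrite !mem_filter => /andP[/eqP h1 _] /andP[/eqP h2 _] e.
by rewrite -(cat_take_drop s w1) -(cat_take_drop s w2) e h1 h2.
Qed.

Lemma key2 (K : fieldType) (f : seq nat -> K) s (L1 y1 L2 y2 : seq nat) :
  (s + size y1 = size L1)%N -> (s + size y2 = size L2)%N ->
  (forall u, size u = s -> perm_eq L1 (u ++ y1) = perm_eq L2 (u ++ y2)) ->
  \sum_(w <- permutations L1) f (take s w) * (drop s w == y1)%:R =
  \sum_(w <- permutations L2) f (take s w) * (drop s w == y2)%:R.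
Proof.
move=> h1 h2 h; rewrite !sum_filter_take; apply: perm_big.
apply: uniq_perm; rewrite ?uniq_filter_take // => u.
rewrite !mem_filter_take //; case: (eqVneq (size u) s) => //= /eqP e.
by apply: h; apply/eqP.
Qed.

Lemma fpart_eq (K : fieldType) T1 (G G0 : tableau) s u :
  (forall j, (j < s)%N -> col G0 j = col G j) -> fpart K T1 G0 s u = fpart K T1 G s u.
Proof.
move=> h; apply: eq_bigr => F1 _; apply: eq_bigr => j _; by rewrite h.
Qed.

Lemma sum_Bv (K : fieldType) (f : seq nat -> K) s (L ys : seq nat) :
  size L = (s + size ys)%N ->
  \sum_(w <- permutations L) f (take s w) * Bv K (drop s w) (map (fun x => [:: x]) ys) =
  \sum_(w <- permutations L) f (take s w) * (drop s w == ys)%:R.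
Proof.
move=> hL; apply: eq_big_seq => w hw; rewrite Bv_single //.
rewrite size_drop; move: hw; rewrite mem_permutations => /perm_size ->.
by rewrite hL addKn.
Qed.

Lemma mainA (K : fieldType) (r1 : seq nat) T1 (G G0 : tableau) s m (ys y0 : seq nat) :
  all (fun x => x <= s)%N (shape T1) -> (s <= size r1)%N ->
  (forall j, (j < s)%N -> col G0 j = col G j) ->
  tailg G0 s (size r1 - s) = map (fun x => [:: x]) y0 ->
  tailg G s (m + (size r1 - s)) = map (fun x => [:: x]) ys ->
  perm_eq ys (nseq m 1%N ++ y0) ->
  weyl_el K (tab_plus m (r1 :: T1)) G = weyl_el K (r1 :: T1) G0.
Proof.
move=> hT1 hs hcol h0 h1 hp.
have sy0 : size y0 = (size r1 - s)%N by rewrite -(size_map (fun x => [:: x])) -h0 size_map size_iota.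
have sys : size ys = (m + (size r1 - s))%N by rewrite -(size_map (fun x => [:: x])) -h1 size_map size_iota.
rewrite /tab_plus (@weyl_split K _ T1 G s (m + (size r1 - s))%N hT1); last first.
  by rewrite size_cat size_nseq; lia.
rewrite (@weyl_split K _ T1 G0 s (size r1 - s)%N hT1); last by lia.
rewrite h0 h1 !sum_Bv ?sy0 ?sys ?size_cat ?size_nseq; try lia.
under [RHS]eq_bigr => w _ do rewrite (fpart_eq _ _ _ hcol).
apply: key2; rewrite ?sy0 ?sys ?size_cat ?size_nseq; try lia.
move=> u _.
have E : perm_eq (u ++ ys) (nseq m 1%N ++ u ++ y0).
  apply: perm_trans (_ : perm_eq (u ++ ys) (u ++ (nseq m 1%N ++ y0))) _; first by rewrite perm_cat2l.
  by rewrite perm_sym perm_catCA.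
rewrite (permPr E) perm_cat2l //.
Qed.

Lemma mainB (K : fieldType) (r1 : seq nat) T1 (G : tableau) s m :
  all (fun x => x <= s)%N (shape T1) -> (s <= size r1)%N -> (s <= count_mem 1%N r1)%N ->
  ~~ (all (fun g => size g == 1%N) (tailg G s (m + (size r1 - s))) &&
      (m <= count_mem 1%N (map (head 0%N) (tailg G s (m + (size r1 - s)))))%N) ->
  weyl_el K (tab_plus m (r1 :: T1)) G = 0.
Proof.
move=> hT1 hs hc hnA.
rewrite /tab_plus (@weyl_split K _ T1 G s (m + (size r1 - s))%N hT1); last first.
  by rewrite size_cat size_nseq; lia.
apply: big1_seq => w hw.
have hp : perm_eq w (nseq m 1%N ++ r1) by rewrite -mem_permutations.
have szw := perm_size hp; rewrite size_cat size_nseq in szw.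
rewrite Bv_eq; last first.
  rewrite size_drop size_map size_iota szw.
  by rewrite addnBA.
case: (tailg G s _ =P _) => [e|_]; last by rewrite mulr0.
exfalso; move: hnA; rewrite e all_map.
have -> : all (preim (fun x : nat => [:: x]) (fun g : seq nat => size g == 1%N)) (drop s w).
  by apply/allP.
rewrite -map_comp map_id /= -ltnNge => hlt.
have := permP hp (pred1 1%N); rewrite count_cat count_nseq /= mul1n.
rewrite -(cat_take_drop s w) count_cat.
have : (count_mem 1%N (take s w) <= s)%N.
  apply: leq_trans (count_size _ _) _; rewrite size_take; case: ifP => //; lia.
move=> h1 h2; have := leq_add h1 hlt; rewrite addnS h2 [(s + m)%N]addnC ltn_add2l.
by rewrite ltnNge hc.
Qed.

Lemma y0_exists (ys : seq nat) m : (m <= count_mem 1%N ys)%N ->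
  exists y0, perm_eq ys (nseq m 1%N ++ y0).
Proof.
elim: m => [|m IH] h; first by exists ys.
have [z hz] := IH (ltnW h).
have cz := permP hz (pred1 1%N); rewrite count_cat count_nseq /= mul1n in cz.
have hz1 : 1%N \in z by rewrite -has_pred1 has_count; move: h; rewrite cz -addn1 leq_add2l.
exists (rem 1%N z).
apply: perm_trans hz _.
apply: perm_trans (_ : perm_eq _ (nseq m 1%N ++ [:: 1%N] ++ rem 1%N z)) _.
  by rewrite perm_cat2l perm_to_rem.
by rewrite perm_catCA; exact: perm_refl.
Qed.

Lemma col_map_eq (X : tableau) (h : seq nat -> seq nat) j :
  (forall r, (j < size (h r))%N = (j < size r)%N) ->
  (forall r, (j < size r)%N -> nth 0%N (h r) j = nth 0%N r j) ->
  col (map h X) j = col X j.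
Proof.
move=> h1 h2; elim: X => [|r X IH] //=.
rewrite !col_cons h1 IH; case: ifP => // hr; by rewrite h2.
Qed.

Lemma col_map_filter (X : tableau) (h : seq nat -> seq nat) j s :
  (forall r, (j < size (h r))%N = (s < size r)%N) ->
  col (map h X) j = map (fun r => nth 0%N (h r) j) (filter (fun r => s < size r)%N X).
Proof.
move=> h1; elim: X => [|r X IH] //=.
rewrite !col_cons h1 IH; by case: ifP.
Qed.

Lemma size_col (X : tableau) s : size (col X s) = size (filter (fun r => s < size r)%N X).
Proof. by elim: X => [|r X IH] //=; rewrite col_cons; case: ifP => //= _; rewrite IH. Qed.

Lemma G0_exists (G : tableau) s N (y0 : seq nat) : size y0 = N -> size (col G s) = 1%N ->
  exists G0 : tableau, (forall j, (j < s)%N -> col G0 j = col G j) /\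
    tailg G0 s N = map (fun x => [:: x]) y0.
Proof.
move=> hy hsz.
exists (map (fun r : seq nat => if (s < size r)%N then take s r ++ y0 else r) G); split.
  move=> j hj; apply: col_map_eq => r; case: ifP => hr //.
    by rewrite size_cat size_takel ?(ltnW hr) // (ltn_addr _ hj) (ltn_trans hj hr).
  by move=> _; rewrite nth_cat size_takel ?(ltnW hr) // hj nth_take.
have E : map (fun x => [:: x]) y0 = map (fun i => [:: nth 0%N y0 i]) (iota 0 N).
  by rewrite -[in LHS](take_size y0) hy -(map_nth_iota0 0%N) ?hy // -map_comp.
rewrite E /tailg; apply/eq_in_map => i; rewrite mem_iota => /andP[_ hi].
rewrite (@col_map_filter _ _ _ s); last first.
  move=> r; case: ifP => hr.
    by rewrite size_cat size_takel ?(ltnW hr) // ltn_add2l hy hi.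
  by apply/negbTE; rewrite -leqNgt; apply: leq_trans (leq_addr _ _); rewrite leqNgt hr.
move: hsz; rewrite size_col.
case E2: (filter _ G) => [|R [|? ?]] // _.
have : R \in filter (fun r => s < size r)%N G by rewrite E2 inE eqxx.
rewrite mem_filter => /andP[hR _] /=.
by rewrite hR nth_cat size_takel ?(ltnW hR) // ltnNge leq_addr /= addKn.
Qed.

Lemma shape_cons (T : tableau) M mu' : shape T = M :: mu' ->
  exists r1 T1, [/\ T = r1 :: T1, size r1 = M & shape T1 = mu'].
Proof. by case: T => [|r1 T1] //= [e1 e2]; exists r1, T1. Qed.

Lemma sorted_facts M (l : seq nat) : sorted geq (M :: l) ->
  (nth 0 l 0 <= M)%N /\ all (fun x => x <= nth 0 l 0)%N l.
Proof.
case: l => [|x l] //= /andP[h1 h2]; split => //; rewrite leqnn /=.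
exact: sorted_geq_all.
Qed.

Unset Implicit Arguments.

Theorem lemma4p4 (K : fieldType) (p n r k d : nat) (lam mu : seq nat)
  (U : tableau) (c : tableau -> K) :
  infinite_field K -> prime p -> p \in [pchar K] ->
  partition_of n r lam -> partition_of n r mu ->
  (nth 0 mu 1 <= nth 0 lam 0)%N ->
  (0 < k)%N -> (0 < d)%N ->
  in_A n lam mu U ->
  (forall G, weyl_el K U G = \sum_(T <- Std n mu) c T * weyl_el K T G) ->
  (forall G, weyl_el K (tab_plus (k * p ^ d) U) G =
     \sum_(T <- Std n mu) c T * weyl_el K (tab_plus (k * p ^ d) T) G).
Proof.
move=> _ pp _ _ hmu hle k0 _ hA hrel G.
set m := (k * p ^ d)%N.
have m0 : (0 < m)%N by rewrite muln_gt0 k0 expn_gt0 prime_gt0.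
case/and3P: hmu => _ smu _.
case: hA => hU hrows [t _ hcnt].
have shU : shape U = mu by case/andP: hU => /eqP.
case: mu smu hle hrel hU shU => [|M mu'] smu hle hrel hU shU.
  case: U hrel hU shU hrows hcnt => [|? ?] // hrel _ _ _ _.
  have -> : Std n [::] = [:: [::]] by [].
  rewrite big_seq1.
  have := hrel [::]; rewrite big_seq1.
  have -> : weyl_el K [::] [::] = 1 by rewrite /weyl_el big_seq1 big_ord0.
  by rewrite mulr1 => <-; rewrite mul1r.
set s := nth 0%N mu' 0.
have [hsM hmus] := sorted_facts smu.
have [u1 [U1 [eU su1 sU1]]] := shape_cons shU.
have hcU : (s <= count_mem 1%N u1)%N.
  move: hcnt; rewrite eU /= => ->; apply: leq_trans hle _; exact: leq_addr.
have hU1 : all (all (fun a => 2 <= a)%N) U1.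
  apply/(all_nthP [::]) => i hi.
  have := hrows i.+1; rewrite eU /= ltnS => /(_ hi) h.
  by apply/allP => a /(allP h); apply: leq_trans.
have hcUf : (s <= count_mem 1%N (flatten U))%N by rewrite eU count1_flatten.
have h3 := step3 smu hU hcUf hrel.
have hstd : forall T, T \in Std n (M :: mu') ->
    exists r1 T1, [/\ T = r1 :: T1, size r1 = M, shape T1 = mu' &
       ((count_mem 1%N r1 < s)%N -> c T = 0)].
  move=> T hT; have [ht st] := mem_Std hT.
  have shT : shape T = M :: mu' by case/andP: ht => /eqP.
  have [r1 [T1 [eT sr1 sT1]]] := shape_cons shT.
  exists r1, T1; split => // hc; apply: h3 => //.
  rewrite eT std_count1 -?eT //; first by rewrite shT.
  case/andP: ht => _; rewrite eT /= => /andP[/allP h _].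
  by apply/allP => a /h /andP[].
set N := (M - s)%N.
set gs := tailg G s (m + N).
have szgs : size gs = (m + N)%N by rewrite /gs /tailg size_map size_iota.
case hAc : (all (fun g => size g == 1%N) gs && (m <= count_mem 1%N (map (head 0%N) gs)))%N.
- case/andP: hAc => hsz1 hcm.
  set ys := map (head 0%N) gs.
  have egs := size1_map hsz1.
  have [y0 hy0] := y0_exists hcm.
  have sy0 : size y0 = N.
    have := perm_size hy0; rewrite size_cat size_nseq /ys size_map szgs.
    by move=> /eqP; rewrite eqn_add2l => /eqP.
  have hcs : size (col G s) = 1%N.
    have : col G (s + 0) \in gs by rewrite /gs /tailg; apply: map_f; rewrite mem_iota /=; lia.
    by rewrite addn0 => /(allP hsz1) /eqP.
  have [G0 [hG0a hG0b]] := G0_exists sy0 hcs.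
  have key : forall T : tableau, shape T = M :: mu' ->
      weyl_el K (tab_plus m T) G = weyl_el K T G0.
    move=> T shT; have [r1 [T1 [-> sr1 sT1]]] := shape_cons shT.
    apply: (@mainA K r1 T1 G G0 s m ys y0) => //.
    + by rewrite sT1.
    + by rewrite sr1.
    + by rewrite sr1.
    + by rewrite sr1 -egs.
  rewrite key // (hrel G0); apply: eq_big_seq => T hT.
  have [r1 [T1 [eT _ _ _]]] := hstd T hT.
  by rewrite key //; have [ht _] := mem_Std hT; case/andP: ht => /eqP.
- have nA : ~~ (all (fun g => size g == 1%N) (tailg G s (m + (M - s))) &&
        (m <= count_mem 1%N (map (head 0%N) (tailg G s (m + (M - s)))))%N).
    exact: negbT hAc.
  rewrite eU (@mainB K u1 U1 G s m) ?sU1 ?su1 ?nA //.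
  symmetry; apply: big1_seq => T /andP[_ hT].
  have [r1 [T1 [eT sr1 sT1 hc]]] := hstd T hT.
  case: (ltnP (count_mem 1%N r1) s) => h.
    by rewrite hc // mul0r.
  by rewrite eT (@mainB K r1 T1 G s m) ?mulr0 ?sT1 ?sr1 ?nA.
Qed.
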